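(* Let $M\ge1$ and for $d\in\{0,1\}$ let $\alpha_d(y)=\mathbb{P}(Y(d)=y,R(d)=1)$, $y\in[M]$. Suppose the response mechanism is the same in both arms, so that the identification set is \[\mathcal T=\Big\{\sum_{y=1}^M y\big(\alpha_1(y)-\alpha_0(y)\big)(w(y)+1):\ w\in\mathbb{R}^M,\ w\ge0,\ \sum_{y}\alpha_1(y)(w(y)+1)=1,\ \sum_y\alpha_0(y)(w(y)+1)=1\Big\}.\] Suppose there exists $y_0\in[M]$ such that $\alpha_1(y)\le\alpha_0(y)$ for all $y<y_0$ and $\alpha_1(y)\ge\alpha_0(y)$ for all $y\ge y_0$. Then $\tau\ge0$ for every $\tau\in\mathcal T$.
   Context: $Y(d)\in[M]$ and $R(d)\in\{0,1\}$ are the potential outcome and potential observation indicator under treatment $d$ in a randomized experiment; the common weight $w(y)$ plays the role of $1/\pi(y)-1$ where $\pi(y)=\mathbb{P}(R(1)=1\mid Y(1)=y)=\mathbb{P}(R(0)=1\mid Y(0)=y)$. $\mathcal T$ is the identification set for $\mathbb{E}[Y(1)-Y(0)]$ under this restriction. *)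

(* Defs.v *)
From mathcomp Require Import all_boot all_order all_algebra.
Set Implicit Arguments. Unset Strict Implicit. Unset Printing Implicit Defensive.
Import Order.TTheory GRing.Theory Num.Theory.
Local Open Scope ring_scope.

Definition ident_set (R : realFieldType) (M : nat) (a1 a0 : nat -> R) (tau : R) : Prop :=
  exists w : nat -> R,
    (forall y : nat, (1 <= y <= M)%N -> 0 <= w y) /\
    \sum_(1 <= y < M.+1) a1 y * (w y + 1) = 1 /\
    \sum_(1 <= y < M.+1) a0 y * (w y + 1) = 1 /\
    tau = \sum_(1 <= y < M.+1) (y%:R) * (a1 y - a0 y) * (w y + 1).

(* Main.v *)
Require Import Defs.
From mathcomp Require Import all_boot all_order all_algebra.
Import Order.TTheory GRing.Theory Num.Theory.
Local Open Scope ring_scope.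

Theorem proposition6 (R : realFieldType) (M : nat) (a1 a0 : nat -> R)
  (hM : (1 <= M)%N)
  (ha1 : forall y : nat, (1 <= y <= M)%N -> 0 <= a1 y)
  (ha0 : forall y : nat, (1 <= y <= M)%N -> 0 <= a0 y)
  (hs1 : \sum_(1 <= y < M.+1) a1 y <= 1)
  (hs0 : \sum_(1 <= y < M.+1) a0 y <= 1)
  (y0 : nat) (hy0 : (1 <= y0 <= M)%N)
  (hlo : forall y : nat, (1 <= y)%N -> (y < y0)%N -> a1 y <= a0 y)
  (hhi : forall y : nat, (y0 <= y <= M)%N -> a0 y <= a1 y) :
  forall tau : R, ident_set M a1 a0 tau -> 0 <= tau.
Proof.
move=> tau [w [hw [e1 [e0 ->]]]].
have hd : \sum_(1 <= y < M.+1) (a1 y - a0 y) * (w y + 1) = 0.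
  under eq_bigr => y _ do rewrite mulrBl.
  by rewrite sumrB e1 e0 subrr.
have -> : \sum_(1 <= y < M.+1) y%:R * (a1 y - a0 y) * (w y + 1) =
  \sum_(1 <= y < M.+1) (y%:R - y0%:R) * ((a1 y - a0 y) * (w y + 1))
  + y0%:R * \sum_(1 <= y < M.+1) (a1 y - a0 y) * (w y + 1).
  rewrite mulr_sumr -big_split /=; apply: eq_bigr => y _.
  by rewrite mulrBl -mulrA subrK.
rewrite hd mulr0 addr0.
rewrite big_nat; apply: sumr_ge0 => y /andP [h1 h2].
have hyM : (1 <= y <= M)%N by rewrite h1 -ltnS h2.
have hw1 : 0 <= w y + 1 by rewrite addr_ge0 // hw.
case: (ltnP y y0) => hyy.
  apply: mulr_le0.
    by rewrite subr_le0 ler_nat ltnW.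
  by apply: mulr_le0_ge0 => //; rewrite subr_le0 hlo.
apply: mulr_ge0.
  by rewrite subr_ge0 ler_nat.
by apply: mulr_ge0 => //; rewrite subr_ge0 hhi // hyy -ltnS h2.
Qed.
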